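(* Let $(X,d),(Y,\rho)\in\mathfrak U$. Then $X\cong Y$ if and only if there exists a bijection $F:X\to Y$ that preserves balls.
   Context: $\operatorname{Sp}(X)=\{d(x,y):x\neq y\}$; $\mathfrak U$ is the class of finite ultrametric spaces $X$ with $|\operatorname{Sp}(X)|=|X|-1$. For a metric space $X$ and $t\in X$: $B_r(t)=\{x:d(x,t)\le r\}$, $\operatorname{Sp}_t(X)=\{d(x,t):x\neq t\}$, $\mathbf B_X=\{B_r(t):t\in X,\ r\in\operatorname{Sp}_t(X)\}$. A map $F:X\to Y$ between metric spaces preserves balls if $F(Z)\in\mathbf B_Y$ for every $Z\in\mathbf B_X$ and $F^{-1}(W)\in\mathbf B_X$ for every $W\in\mathbf B_Y$. For a finite ultrametric space $X$ (with $X\cap\operatorname{Sp}(X)=\varnothing$, achievable up to isometry), the representing tree $T_X$ is the labelled rooted tree defined recursively: for $X=\{x\}$ a single node labelled $x$; for $|X|\ge2$ the root is labelled $\operatorname{diam}X$ and has one child for each class $X_i$ of the equivalence relation $x\sim y\iff d(x,y)<\operatorname{diam}X$, labelled $x$ if $X_i=\{x\}$ and otherwise labelled $\operatorname{diam}X_i$ with the recursively constructed tree for $X_i$ below it. $\overline{T}_X$ is $T_X$ with labels erased, and $X\cong Y$ means $\overline T_X$ and $\overline T_Y$ are isomorphic rooted trees. *)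

(* Defs.v *)
From HB Require Import structures.
From mathcomp Require Import all_boot all_order all_algebra.
From mathcomp Require Import reals.
Set Implicit Arguments. Unset Strict Implicit. Unset Printing Implicit Defensive.
Import Order.TTheory GRing.Theory Num.Theory.
Local Open Scope ring_scope.

Definition ultrametric (R : realType) (T : finType) (d : T -> T -> R) : Prop :=
  [/\ forall x y, d x y = 0 <-> x = y,
      forall x y, d x y = d y x,
      forall x y, 0 <= d x y &
      forall x y z, d x z <= Num.max (d x y) (d y z)].

Definition Sp (R : realType) (T : finType) (d : T -> T -> R) : seq R :=
  undup [seq d p.1 p.2 | p in [pred p : T * T | p.1 != p.2]].

(* class U: finite (nonempty) ultrametric spaces with |Sp X| = |X| - 1 *)
Definition in_U (R : realType) (T : finType) (d : T -> T -> R) : Prop :=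
  ultrametric d /\ (size (Sp d)).+1 = #|T|.

Definition ball (R : realType) (T : finType) (d : T -> T -> R) (r : R) (t : T)
  : {set T} := [set x | d x t <= r].

(* Z \in B_X : Z = B_r(t) for some t and some r in Sp_t(X) *)
Definition is_ball (R : realType) (T : finType) (d : T -> T -> R) (Z : {set T})
  : Prop := exists t x, x != t /\ Z = ball d (d x t) t.

Definition preserves_balls (R : realType) (T U : finType)
  (d : T -> T -> R) (rho : U -> U -> R) (F : T -> U) : Prop :=
  (forall Z, is_ball d Z -> is_ball rho (F @: Z)) /\
  (forall W, is_ball rho W -> is_ball d (F @^-1: W)).

Inductive rtree := Node of seq rtree.
Definition leaf := Node [::].
Definition children (t : rtree) : seq rtree := let: Node s := t in s.

Inductive tree_iso : rtree -> rtree -> Prop :=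
  | tree_iso_node (s t : seq rtree) (sigma : 'I_(size s) -> 'I_(size t)) :
      bijective sigma ->
      (forall i : 'I_(size s), tree_iso (nth leaf s i) (nth leaf t (sigma i))) ->
      tree_iso (Node s) (Node t).

Definition diam (R : realType) (T : finType) (d : T -> T -> R) (A : {set T}) : R :=
  \big[Num.max/0]_(x in A) \big[Num.max/0]_(y in A) d x y.

Definition diam_classes (R : realType) (T : finType) (d : T -> T -> R)
  (A : {set T}) : {set {set T}} :=
  equivalence_partition (fun x y => d x y < diam d A) A.

(* unlabelled representing tree of the subspace A (fuel n >= #|A|) *)
Fixpoint rep_tree_aux (R : realType) (T : finType) (d : T -> T -> R)
  (n : nat) (A : {set T}) : rtree :=
  match n with
  | 0 => leaf
  | n'.+1 => if (#|A| <= 1)%N then leaf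
             else Node [seq rep_tree_aux d n' C | C <- enum (diam_classes d A)]
  end.

Definition rep_tree (R : realType) (T : finType) (d : T -> T -> R) : rtree :=
  rep_tree_aux d #|T| [set: T].

Definition ucong (R : realType) (T U : finType)
  (d : T -> T -> R) (rho : U -> U -> R) : Prop :=
  tree_iso (rep_tree d) (rep_tree rho).

(* Main.v *)
Require Import Defs.
From mathcomp Require Import all_boot all_order all_algebra.
From mathcomp Require Import reals.
Set Implicit Arguments. Unset Strict Implicit. Unset Printing Implicit Defensive.
Import Order.TTheory GRing.Theory Num.Theory.
Local Open Scope ring_scope.

Definition isK (R : realType) (T : finType) (d : T -> T -> R) (Z : {set T}) :=
  exists t x, Z = ball d (d x t) t.

Lemma dxx (R : realType) (T : finType) (d : T -> T -> R) :
  ultrametric d -> forall x, d x x = 0.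
Proof. by case=> h _ _ _ x; apply/h. Qed.
Lemma dsym (R : realType) (T : finType) (d : T -> T -> R) :
  ultrametric d -> forall x y, d x y = d y x.
Proof. by case. Qed.
Lemma dge0 (R : realType) (T : finType) (d : T -> T -> R) :
  ultrametric d -> forall x y, 0 <= d x y.
Proof. by case. Qed.
Lemma d0eq (R : realType) (T : finType) (d : T -> T -> R) :
  ultrametric d -> forall x y, d x y = 0 -> x = y.
Proof. by case=> h _ _ _ x y; move/h. Qed.
Lemma dle (R : realType) (T : finType) (d : T -> T -> R) :
  ultrametric d -> forall x y z r, d x y <= r -> d y z <= r -> d x z <= r.
Proof.
case=> _ _ _ h x y z r h1 h2; apply: le_trans (h x y z) _.
by rewrite ge_max h1 h2.
Qed.
Lemma dlt (R : realType) (T : finType) (d : T -> T -> R) :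
  ultrametric d -> forall x y z r, d x y < r -> d y z < r -> d x z < r.
Proof.
case=> _ _ _ h x y z r h1 h2; apply: le_lt_trans (h x y z) _.
by rewrite gt_max h1 h2.
Qed.
Lemma dpos (R : realType) (T : finType) (d : T -> T -> R) :
  ultrametric d -> forall x y, x != y -> 0 < d x y.
Proof.
move=> hd x y nxy; rewrite lt_def dge0 // andbT; apply/eqP=> h.
by move: nxy; rewrite (d0eq hd h) eqxx.
Qed.

Lemma max_att (R : realType) (I : finType) (P : pred I) (F : I -> R) i0 :
  P i0 -> exists i, P i /\ forall j, P j -> F j <= F i.
Proof.
move=> Pi0; case: (arg_maxP F Pi0) => i Pi H; exists i; split=> //.
Qed.

Lemma ball_self (R : realType) (T : finType) (d : T -> T -> R) :
  ultrametric d -> forall r t, 0 <= r -> t \in ball d r t.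
Proof. by move=> hd r t r0; rewrite inE dxx. Qed.

Lemma isK_n0 (R : realType) (T : finType) (d : T -> T -> R) :
  ultrametric d -> forall Z, isK d Z -> exists t, t \in Z.
Proof. by move=> hd Z [t [x ->]]; exists t; apply: ball_self => //; exact: dge0. Qed.

Lemma isK_set1 (R : realType) (T : finType) (d : T -> T -> R) :
  ultrametric d -> forall t, isK d [set t].
Proof.
move=> hd t; exists t, t; apply/setP=> y; rewrite !inE dxx //.
apply/eqP/idP => [->|h]; first by rewrite dxx.
by apply: (d0eq hd); apply/eqP; rewrite eq_le h dge0.
Qed.

Lemma isK_setT (R : realType) (T : finType) (d : T -> T -> R) :
  ultrametric d -> forall t : T, isK d [set: T].
Proof.
move=> hd t; have [x [_ H]] := max_att (fun x => d x t) (isT : predT t).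
exists t, x; apply/setP=> y; rewrite !inE H //.
Qed.

Lemma diam_ge (R : realType) (T : finType) (d : T -> T -> R) (A : {set T}) x y :
  x \in A -> y \in A -> d x y <= diam d A.
Proof.
move=> xA yA; rewrite /diam.
apply: le_trans (le_bigmax_cond _ _ xA); exact: le_bigmax_cond.
Qed.

Lemma diam_le (R : realType) (T : finType) (d : T -> T -> R) (A : {set T}) c :
  0 <= c -> (forall x y, x \in A -> y \in A -> d x y <= c) -> diam d A <= c.
Proof.
move=> c0 H; rewrite /diam; apply/bigmax_leP; split=> // x xA.
apply/bigmax_leP; split=> // y yA; exact: H.
Qed.

Lemma diam_att (R : realType) (T : finType) (d : T -> T -> R) (A : {set T}) :
  ultrametric d -> (1 < #|A|)%N ->
  exists a b, [/\ a \in A, b \in A, a != b & d a b = diam d A].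
Proof.
move=> hd /card_gt1P [x [y [xA yA nxy]]].
have P0 : (fun p : T * T => (p.1 \in A) && (p.2 \in A)) (x, y) by rewrite /= xA yA.
have [[a b] [/= /andP [aA bA] H]] := @max_att R _ (fun p : T * T => (p.1 \in A) && (p.2 \in A)) (fun p => d p.1 p.2) (x, y) P0.
have dab : d a b = diam d A.
  apply/eqP; rewrite eq_le diam_ge //= diam_le //; first exact: dge0.
  by move=> u v uA vA; apply: (H (u, v)); rewrite /= uA vA.
exists a, b; split=> //; apply/eqP=> eab; subst b.
have : 0 < d x y by apply: dpos.
have : d x y <= d a a by apply: (H (x, y)); rewrite /= xA yA.
by rewrite dxx // => h1 h2; have := lt_le_trans h2 h1; rewrite ltxx.
Qed.

Lemma diam_pos (R : realType) (T : finType) (d : T -> T -> R) (A : {set T}) :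
  ultrametric d -> (1 < #|A|)%N -> 0 < diam d A.
Proof.
move=> hd h; have [a [b [aA bA nab <-]]] := diam_att hd h; exact: dpos.
Qed.

Lemma cl_eqrel (R : realType) (T : finType) (d : T -> T -> R) (A : {set T}) :
  ultrametric d -> (1 < #|A|)%N ->
  {in A & &, equivalence_rel (fun x y => d x y < diam d A)}.
Proof.
move=> hd h x y z _ _ _; split; first by rewrite dxx // diam_pos.
move=> hxy; apply/idP/idP => h2.
  by apply: (dlt hd) h2; rewrite dsym.
exact: (dlt hd) hxy h2.
Qed.

Lemma cl_part (R : realType) (T : finType) (d : T -> T -> R) (A : {set T}) :
  ultrametric d -> (1 < #|A|)%N -> partition (diam_classes d A) A.
Proof. move=> hd h; exact: equivalence_partitionP (cl_eqrel hd h). Qed.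

Lemma pblockE (R : realType) (T : finType) (d : T -> T -> R) (A : {set T}) x :
  ultrametric d -> (1 < #|A|)%N -> x \in A ->
  pblock (diam_classes d A) x = [set y in A | d x y < diam d A].
Proof.
move=> hd h xA; have := cl_part hd h; case/and3P=> /eqP cov triv _.
apply/setP=> y; rewrite inE; case yA: (y \in A) => /=.
  by rewrite /diam_classes (pblock_equivalence_partition (cl_eqrel hd h)).
apply/negbTE/negP=> yb.
have : y \in cover (diam_classes d A).
  apply/bigcupP; exists (pblock (diam_classes d A) x) => //.
  by apply: pblock_mem; rewrite cov.
by rewrite cov yA.
Qed.

Lemma classE (R : realType) (T : finType) (d : T -> T -> R) (A : {set T}) C :
  ultrametric d -> (1 < #|A|)%N -> C \in diam_classes d A ->
  exists2 x, x \in A & C = pblock (diam_classes d A) x.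
Proof.
move=> hd h CP; have := cl_part hd h; case/and3P=> /eqP cov triv n0.
have [x xC] : exists x, x \in C.
  apply/set0Pn; apply: contraNneq n0 => <-; exact: CP.
exists x; last by rewrite (def_pblock triv CP xC).
by rewrite -cov; apply/bigcupP; exists C.
Qed.

Lemma ballD (R : realType) (T : finType) (d : T -> T -> R) (A : {set T}) t :
  ultrametric d -> isK d A -> t \in A -> A = ball d (diam d A) t.
Proof.
move=> hd [t0 [x0 eA]] tA.
have Dle : diam d A <= d x0 t0.
  apply: diam_le; first exact: dge0.
  move=> u v; rewrite eA !inE => hu hv; apply: (dle hd) hu _; by rewrite dsym.
apply/setP=> y; rewrite [in RHS]inE; apply/idP/idP => [yA|hy].
  exact: diam_ge.
have tA' := tA; rewrite eA inE in tA'.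
rewrite eA inE; apply: (dle hd) (le_trans hy Dle) tA'.
Qed.

Lemma class_K (R : realType) (T : finType) (d : T -> T -> R) (A : {set T}) C :
  ultrametric d -> isK d A -> (1 < #|A|)%N -> C \in diam_classes d A ->
  isK d C /\ C \proper A.
Proof.
move=> hd hA h CP; have [x xA eC] := classE hd h CP.
rewrite pblockE // in eC; subst C.
split.
  have xC : x \in [set y in A | d x y < diam d A] by rewrite inE xA dxx // diam_pos.
  have [y [yC H]] := @max_att R T (fun y => y \in [set y in A | d x y < diam d A]) (fun y => d y x) x xC.
  exists x, y; apply/setP=> z; rewrite [in RHS]inE; apply/idP/idP => [zC|hz].
    exact: H.
  move: yC; rewrite /= inE; case/andP=> yA hy.
  have hz' : d x z < diam d A by rewrite dsym //; apply: le_lt_trans hz _; rewrite dsym.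
  rewrite inE hz' andbT (ballD hd hA xA) inE; apply: ltW; by rewrite dsym.
rewrite properEneq; apply/andP; split; last first.
  by apply/subsetP=> z; rewrite inE; case/andP.
have [a [b [aA bA _ dab]]] := diam_att hd h.
apply/negP=> /eqP e.
have : d a b < diam d A.
  have : a \in [set y in A | d x y < diam d A] by rewrite e.
  have : b \in [set y in A | d x y < diam d A] by rewrite e.
  rewrite !inE => /andP [_ hb] /andP [_ ha].
  by apply: (dlt hd) hb; rewrite dsym.
by rewrite dab ltxx.
Qed.

Lemma sub_class (R : realType) (T : finType) (d : T -> T -> R) (A : {set T}) Z :
  ultrametric d -> isK d A -> (1 < #|A|)%N -> isK d Z -> Z \proper A ->
  exists2 C, C \in diam_classes d A & Z \subset C.
Proof.
move=> hd hA h [t [z eZ]] pZ.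
have tZ : t \in Z by rewrite eZ; apply: ball_self => //; exact: dge0.
have tA : t \in A by apply: (subsetP (proper_sub pZ)).
have [le|lt] := leP (diam d A) (d z t).
  have := pZ; rewrite properEneq => /andP [/negP nZ _]; exfalso; apply: nZ.
  rewrite eqEsubset (proper_sub pZ) /=; apply/subsetP=> y.
  rewrite (ballD hd hA tA) eZ !inE => hy; exact: le_trans hy le.
exists (pblock (diam_classes d A) t).
  apply: pblock_mem; have := cl_part hd h; case/and3P=> /eqP -> _ _; exact: tA.
rewrite pblockE //; apply/subsetP=> y yZ; rewrite inE.
rewrite (subsetP (proper_sub pZ) _ yZ) /=.
move: yZ; rewrite eZ inE => hy; rewrite dsym //; exact: le_lt_trans hy lt.
Qed.

Lemma tree_iso_inv s t : tree_iso (Node s) (Node t) ->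
  exists sigma : 'I_(size s) -> 'I_(size t), bijective sigma /\
    forall i : 'I_(size s), tree_iso (nth leaf s i) (nth leaf t (sigma i)).
Proof.
have H : forall x y, tree_iso x y ->
  exists sigma : 'I_(size (children x)) -> 'I_(size (children y)), bijective sigma /\
    forall i : 'I_(size (children x)), tree_iso (nth leaf (children x) i) (nth leaf (children y) (sigma i)).
  by move=> x y [s' t' sigma hb hi]; exists sigma.
exact: H.
Qed.

Lemma tree_iso_size s t : tree_iso (Node s) (Node t) -> size s = size t.
Proof.
case/tree_iso_inv=> sigma [hb _]; have := bij_eq_card hb; by rewrite !card_ord.
Qed.

Lemma iso_map_fwd (X Y : eqType) (s : seq X) (t : seq Y) (f : X -> rtree)
  (g : Y -> rtree) (x0 : X) (y0 : Y) :
  uniq s -> uniq t -> tree_iso (Node (map f s)) (Node (map g t)) ->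
  exists h : X -> Y, [/\ {in s &, injective h}, (forall x, x \in s -> h x \in t),
    (forall y, y \in t -> exists2 x, x \in s & y = h x) &
    (forall x, x \in s -> tree_iso (f x) (g (h x)))].
Proof.
move=> us ut /tree_iso_inv [sigma [[sinv sK sKV] hi]].
pose h x := match @insub _ _ 'I_(size (map f s)) (index x s) with
            Some i => nth y0 t (sigma i) | None => y0 end.
have hE : forall x, x \in s -> exists i : 'I_(size (map f s)),
    val i = index x s /\ h x = nth y0 t (sigma i).
  move=> x xs; rewrite /h; case: insubP => [i _ vi|]; first by exists i.
  by move=> /negP []; rewrite size_map index_mem.
have st : forall j : 'I_(size (map g t)), (j < size t)%N.
  by move=> j; rewrite -(size_map g); exact: ltn_ord.
have ss : forall j : 'I_(size (map f s)), (j < size s)%N.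
  by move=> j; rewrite -(size_map f); exact: ltn_ord.
exists h; split.
- move=> x x' xs x's; have [i [vi ->]] := hE x xs; have [i' [vi' ->]] := hE x' x's.
  move/eqP; rewrite nth_uniq ?st // => /eqP e; have eii := can_inj sK (val_inj e).
  by rewrite -(nth_index x0 xs) -(nth_index x0 x's) -vi -vi' eii.
- move=> x xs; have [i [_ ->]] := hE x xs; exact: mem_nth.
- move=> y yt.
  have jP : (index y t < size (map g t))%N by rewrite size_map index_mem.
  pose j := Ordinal jP; pose i := sinv j.
  exists (nth x0 s i); first exact: mem_nth.
  have [i' [vi' ->]] := hE _ (mem_nth x0 (ss i)).
  rewrite index_uniq // in vi'.
  have -> : i' = i by apply: val_inj.
  by rewrite sKV /= nth_index.
- move=> x xs; have [i [vi ->]] := hE x xs.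
  have := hi i; rewrite (nth_map x0) // (nth_map y0) //.
  by rewrite vi nth_index.
Qed.

Lemma iso_map_bwd (X Y : eqType) (s : seq X) (t : seq Y) (f : X -> rtree)
  (g : Y -> rtree) (h : X -> Y) (x0 : X) :
  uniq s -> uniq t -> {in s &, injective h} -> (forall x, x \in s -> h x \in t) ->
  (forall y, y \in t -> exists2 x, x \in s & y = h x) ->
  (forall x, x \in s -> tree_iso (f x) (g (h x))) ->
  tree_iso (Node (map f s)) (Node (map g t)).
Proof.
move=> us ut hinj hin hsurj hiso.
have pe : perm_eq (map h s) t.
  apply: uniq_perm => //; first by rewrite map_inj_in_uniq.
  move=> y; apply/mapP/idP => [[x xs ->]|yt]; first exact: hin.
  by have [x xs ->] := hsurj y yt; exists x.
have sz : size s = size t by rewrite -(perm_size pe) size_map.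
have ss : forall i : 'I_(size (map f s)), (i < size s)%N.
  by move=> i; rewrite -(size_map f); exact: ltn_ord.
have sigP : forall i : 'I_(size (map f s)),
    (index (h (nth x0 s i)) t < size (map g t))%N.
  by move=> i; rewrite (size_map g) index_mem; apply: hin; exact: mem_nth.
pose sigma := fun i => Ordinal (sigP i).
apply: (@tree_iso_node _ _ sigma).
  apply: inj_card_bij; last by rewrite !card_ord !size_map sz.
  move=> i i' /(congr1 val) /= e.
  have e2 : h (nth x0 s i) = h (nth x0 s i').
    by rewrite -(nth_index (h x0) (hin _ (mem_nth x0 (ss i)))) e nth_index //;
      apply: hin; exact: mem_nth.
  have := hinj _ _ (mem_nth x0 (ss i)) (mem_nth x0 (ss i')) e2.
  by move/eqP; rewrite nth_uniq // => /eqP /val_inj.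
move=> i; rewrite (nth_map x0) // (nth_map (h x0)) /=; last first.
  by rewrite index_mem; apply: hin; exact: mem_nth.
rewrite nth_index; last by apply: hin; exact: mem_nth.
apply: hiso; exact: mem_nth.
Qed.

Lemma imK (T U : finType) (F : T -> U) (g : U -> T) (X : {set T}) :
  cancel F g -> [set g y | y in [set F x | x in X]] = X.
Proof.
move=> FK; apply/setP=> x; apply/imsetP/idP => [[y /imsetP [z zX ->] ->]|xX].
  by rewrite FK.
by exists (F x); rewrite ?FK // imset_f.
Qed.

Lemma class_max (R : realType) (T : finType) (d : T -> T -> R) (A C Z : {set T}) :
  ultrametric d -> isK d A -> (1 < #|A|)%N -> C \in diam_classes d A ->
  isK d Z -> C \subset Z -> Z \proper A -> Z = C.
Proof.
move=> hd hA h CP hZ CZ ZA.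
have [C2 C2P ZC2] := sub_class hd hA h hZ ZA.
have [x xA eC] := classE hd h CP.
have := cl_part hd h; case/and3P=> /eqP cov triv _.
have xC : x \in C by rewrite eC mem_pblock cov.
have xC2 : x \in C2 by apply: (subsetP ZC2); apply: (subsetP CZ).
have e : C2 = C by rewrite -(def_pblock triv C2P xC2) -(def_pblock triv CP xC).
by apply/eqP; rewrite eqEsubset CZ andbT -e.
Qed.

Lemma classes_image (R : realType) (T U : finType) (d : T -> T -> R)
  (rho : U -> U -> R) (F : T -> U) (A C : {set T}) :
  ultrametric d -> ultrametric rho -> bijective F ->
  (forall Z, isK d Z <-> isK rho (F @: Z)) ->
  isK d A -> (1 < #|A|)%N -> C \in diam_classes d A ->
  F @: C \in diam_classes rho (F @: A).
Proof.
move=> hd hr [g FK gK] HK hA h CP.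
have Finj : injective F := can_inj FK.
have hA' : isK rho (F @: A) by apply: (proj1 (HK _)).
have h' : (1 < #|F @: A|)%N by rewrite card_imset.
have [KC pC] := class_K hd hA h CP.
have pC' : F @: C \proper F @: A.
  rewrite properEneq imsetS ?andbT ?(proper_sub pC) //.
  apply/negP=> /eqP /(imset_inj Finj) e; move: pC; by rewrite e properE subxx.
have [D DP CD] := sub_class hr hA' h' (proj1 (HK C) KC) pC'.
have [KD pD] := class_K hr hA' h' DP.
have eD : F @: (g @: D) = D by apply: imK.
have KZ : isK d (g @: D) by apply: (proj2 (HK _)); rewrite eD.
have CZ : C \subset g @: D by rewrite -(imK C FK) imsetS.
have ZA : g @: D \proper A.
  rewrite properEneq -{2}(imK A FK) imsetS ?andbT ?(proper_sub pD) //.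
  apply/negP=> /eqP e; move: pD; by rewrite -eD e properE subxx.
have := class_max hd hA h CP KZ CZ ZA => eZ.
by rewrite -eZ eD.
Qed.

Lemma tree_iso_leaf : tree_iso leaf leaf.
Proof.
apply: (@tree_iso_node [::] [::] id); first exact: (Bijective (g := id)).
by case.
Qed.

Lemma bwd_aux (R : realType) (T U : finType) (d : T -> T -> R)
  (rho : U -> U -> R) (F : T -> U) :
  ultrametric d -> ultrametric rho -> bijective F ->
  (forall Z, isK d Z <-> isK rho (F @: Z)) ->
  forall n A, isK d A -> (#|A| <= n)%N ->
  tree_iso (rep_tree_aux d n A) (rep_tree_aux rho n (F @: A)).
Proof.
move=> hd hr Fb HK; have [g FK gK] := Fb.
have Finj : injective F := can_inj FK.
have gb : bijective g by exists F.
have HKg : forall W, isK rho W <-> isK d (g @: W).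
  move=> W; rewrite (HK (g @: W)) imK //.
elim=> [|n IH] A hA hn /=; first exact: tree_iso_leaf.
rewrite card_imset //; case: ifP => h1; first exact: tree_iso_leaf.
have h : (1 < #|A|)%N by rewrite ltnNge h1.
apply: (@iso_map_bwd {set T} {set U} (enum (diam_classes d A)) (enum (diam_classes rho (F@:A))) (rep_tree_aux d n) (rep_tree_aux rho n) (fun C => F @: C) set0).
- exact: enum_uniq.
- exact: enum_uniq.
- move=> C C' _ _; exact: imset_inj.
- move=> C; rewrite !mem_enum; exact: classes_image.
- move=> D; rewrite !mem_enum => DP.
  exists (g @: D); last by rewrite imK.
  rewrite mem_enum -(imK A FK).
  apply: (classes_image hr hd gb HKg) => //; first exact: (proj1 (HK _)).
  by rewrite card_imset.
- move=> C; rewrite mem_enum => CP.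
  have [KC pC] := class_K hd hA h CP.
  apply: IH => //; rewrite -ltnS; exact: leq_trans (proper_card pC) hn.
Qed.

Lemma pb_mem (T : finType) (P : {set {set T}}) A x :
  partition P A -> x \in A -> pblock P x \in P.
Proof. by case/and3P=> /eqP cov _ _ xA; apply: pblock_mem; rewrite cov. Qed.
Lemma pb_in (T : finType) (P : {set {set T}}) A x :
  partition P A -> x \in A -> x \in pblock P x.
Proof. by case/and3P=> /eqP cov _ _ xA; rewrite mem_pblock cov. Qed.
Lemma pb_def (T : finType) (P : {set {set T}}) A C x :
  partition P A -> C \in P -> x \in C -> pblock P x = C.
Proof. by case/and3P=> _ triv _; apply: def_pblock. Qed.
Lemma pb_sub (T : finType) (P : {set {set T}}) A C x :
  partition P A -> C \in P -> x \in C -> x \in A.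
Proof. by case/and3P=> /eqP <- _ _ CP xC; apply/bigcupP; exists C. Qed.

Lemma single (T : finType) (A : {set T}) a :
  (#|A| <= 1)%N -> a \in A -> A = [set a].
Proof.
move=> /card_le1P h aA; apply/setP=> x; rewrite inE; exact: (h a aA x).
Qed.

Lemma isK_0 (R : realType) (T : finType) (d : T -> T -> R) :
  ultrametric d -> ~ isK d set0.
Proof. by move=> hd /(isK_n0 hd) [t]; rewrite inE. Qed.

Lemma Kcard (R : realType) (T : finType) (d : T -> T -> R) A :
  ultrametric d -> isK d A -> (0 < #|A|)%N.
Proof. by move=> hd /(isK_n0 hd) [t tA]; apply/card_gt0P; exists t. Qed.

Lemma classes_n0 (R : realType) (T : finType) (d : T -> T -> R) A :
  ultrametric d -> isK d A -> (1 < #|A|)%N -> size (enum (diam_classes d A)) <> 0%N.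
Proof.
move=> hd hA h; rewrite -cardE; have [t tA] := isK_n0 hd hA.
have := pb_mem (cl_part hd h) tA => tP.
by move/eqP; rewrite cards_eq0 => /eqP e; rewrite e inE in tP.
Qed.

Definition FP (R : realType) (T U : finType) (d : T -> T -> R) (rho : U -> U -> R)
  (A : {set T}) (B : {set U}) (F : T -> U) :=
  [/\ {in A &, injective F}, F @: A = B &
      forall Z : {set T}, Z \subset A -> (isK d Z <-> isK rho (F @: Z))].

Lemma fwd_aux (R : realType) (T U : finType) (d : T -> T -> R)
  (rho : U -> U -> R) :
  ultrametric d -> ultrametric rho ->
  forall n A m B, isK d A -> isK rho B -> (#|A| <= n)%N -> (#|B| <= m)%N ->
  tree_iso (rep_tree_aux d n A) (rep_tree_aux rho m B) ->
  exists F, FP d rho A B F.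
Proof.
move=> hd hr; elim=> [|n IH] A m B hA hB hn hm.
  by move: (leq_trans (Kcard hd hA) hn).
case: m hm => [|m] hm.
  by move: (leq_trans (Kcard hr hB) hm).
rewrite /=; case: ifP => h1; case: ifP => h2.
-
  have [a aA] := isK_n0 hd hA; have [b bB] := isK_n0 hr hB.
  have eA := single h1 aA; have eB := single h2 bB.
  exists (fun _ => b); split.
  + by move=> x y; rewrite eA !inE => /eqP -> /eqP ->.
  + by rewrite eA eB imset_set1.
  + move=> Z; rewrite eA subset1 => /orP [] /eqP ->.
      by rewrite imset_set1 -eB -eA; split.
    rewrite imset0; split=> hK; exfalso; [exact: (isK_0 hd hK) | exact: (isK_0 hr hK)].
- move/tree_iso_size => /= /esym; rewrite size_map => e; exfalso.
  by apply: (classes_n0 hr hB _ e); rewrite ltnNge h2.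
- move/tree_iso_size => /=; rewrite size_map => e; exfalso.
  by apply: (classes_n0 hd hA _ e); rewrite ltnNge h1.
have hA2 : (1 < #|A|)%N by rewrite ltnNge h1.
have hB2 : (1 < #|B|)%N by rewrite ltnNge h2.
have partA := cl_part hd hA2; have partB := cl_part hr hB2.
move/(iso_map_fwd set0 set0 (enum_uniq _) (enum_uniq _)) => [h [hinj hin hsurj hiso]].
have [b bB] := isK_n0 hr hB.
have HG0 : forall C, exists G, C \in diam_classes d A -> FP d rho C (h C) G.
  move=> C; case CP: (C \in diam_classes d A); last by exists (fun _ => b).
  have CP' : C \in enum (diam_classes d A) by rewrite mem_enum.
  have [KC pC] := class_K hd hA hA2 CP.
  have hCP := hin C CP'; rewrite mem_enum in hCP.
  have [KD pD] := class_K hr hB hB2 hCP.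
  have [G HG] := IH C m (h C) KC KD
    (leq_trans (proper_card pC) hn) (leq_trans (proper_card pD) hm) (hiso C CP').
  by exists G.
have [G HG] := boolp.choice HG0.
pose F x := G (pblock (diam_classes d A) x) x.
have hin' : forall C, C \in diam_classes d A -> h C \in diam_classes rho B.
  by move=> C CP; rewrite -mem_enum; apply: hin; rewrite mem_enum.
have hinj' : forall C C', C \in diam_classes d A -> C' \in diam_classes d A ->
    h C = h C' -> C = C'.
  by move=> C C' CP C'P; apply: hinj; rewrite mem_enum.
have hsurj' : forall D, D \in diam_classes rho B ->
    exists2 C, C \in diam_classes d A & D = h C.
  move=> D DP; have [|C CP ->] := hsurj D; first by rewrite mem_enum.
  by exists C => //; rewrite -mem_enum.
have FinD : forall x, x \in A -> F x \in h (pblock (diam_classes d A) x).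
  move=> x xA; have CP := pb_mem partA xA; have [_ eC _] := HG _ CP.
  by rewrite /F -eC imset_f // (pb_in partA xA).
have blockF : forall x, x \in A ->
    pblock (diam_classes rho B) (F x) = h (pblock (diam_classes d A) x).
  move=> x xA; apply: (pb_def partB); [exact: hin' (pb_mem partA xA) | exact: FinD].
have Finj : {in A &, injective F}.
  move=> x y xA yA e.
  have eC : pblock (diam_classes d A) x = pblock (diam_classes d A) y.
    apply: hinj'; [exact: pb_mem partA xA | exact: pb_mem partA yA |].
    by rewrite -!blockF // e.
  have [Ginj _ _] := HG _ (pb_mem partA xA).
  apply: Ginj; [exact: pb_in partA xA | rewrite eC; exact: pb_in partA yA |].
  by move: e; rewrite /F -eC.
have FAB : F @: A = B.
  apply/setP=> y; apply/imsetP/idP => [[x xA ->]|yB].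
    exact: pb_sub partB (hin' _ (pb_mem partA xA)) (FinD x xA).
  have [C CP eD] := hsurj' _ (pb_mem partB yB).
  have [_ eC _] := HG _ CP.
  have : y \in G C @: C by rewrite eC -eD (pb_in partB yB).
  case/imsetP=> x xC ->; exists x; first exact: pb_sub partA CP xC.
  by rewrite /F (pb_def partA CP xC).
have Feq : forall C Z : {set T}, C \in diam_classes d A -> Z \subset C -> F @: Z = G C @: Z.
  move=> C Z CP ZC; apply: eq_in_imset => z zZ.
  by rewrite /F (pb_def partA CP (subsetP ZC _ zZ)).
exists F; split => // Z ZA.
have [eZ|nZ] := eqVneq Z A.
  by rewrite eZ FAB; split.
have pZ : Z \proper A by rewrite properEneq nZ ZA.
split=> KZ.
  have [C CP ZC] := sub_class hd hA hA2 KZ pZ.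
  have [_ _ HC] := HG _ CP; rewrite (Feq C Z CP ZC); exact: (proj1 (HC Z ZC) KZ).
have cZ : #|F @: Z| = #|Z|.
  by apply: card_in_imset => x y xZ yZ; apply: Finj; apply: (subsetP ZA).
have FZB : F @: Z \subset B by rewrite -FAB imsetS.
have pFZ : F @: Z \proper B.
  rewrite properEneq FZB andbT; apply/negP => /eqP e.
  by have := proper_card pZ; rewrite -(card_in_imset Finj) FAB -e cZ ltnn.
have [D DP FZD] := sub_class hr hB hB2 KZ pFZ.
have [C CP eD] := hsurj' _ DP.
have ZC : Z \subset C.
  apply/subsetP=> z zZ; have zA := subsetP ZA _ zZ.
  have e1 : pblock (diam_classes rho B) (F z) = D.
    by apply: (pb_def partB DP); apply: (subsetP FZD); exact: imset_f.
  rewrite blockF // eD in e1.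
  have e2 := hinj' _ _ (pb_mem partA zA) CP e1; rewrite -e2; exact: pb_in partA zA.
have [_ _ HC] := HG _ CP; rewrite (Feq C Z CP ZC) in KZ.
exact: (proj2 (HC Z ZC) KZ).
Qed.

Lemma ball_tt (R : realType) (T : finType) (d : T -> T -> R) :
  ultrametric d -> forall t, ball d (d t t) t = [set t].
Proof.
move=> hd t; apply/setP=> y; rewrite !inE dxx //.
apply/idP/eqP => [h|->]; last by rewrite dxx.
by apply: (d0eq hd); apply/eqP; rewrite eq_le h dge0.
Qed.

Lemma isb_K (R : realType) (T : finType) (d : T -> T -> R) Z :
  ultrametric d -> is_ball d Z <-> isK d Z /\ (1 < #|Z|)%N.
Proof.
move=> hd; split.
  move=> [t [x [nxt eZ]]]; split; first by exists t, x.
  apply/card_gt1P; exists x, t; rewrite eZ !inE lexx dxx // dge0 //; split=> //.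
move=> [[t [x eZ]] h]; exists t, x; split=> //; apply/negP=> /eqP ext.
by move: h; rewrite eZ ext ball_tt // cards1.
Qed.

Lemma HK_pb (R : realType) (T U : finType) (d : T -> T -> R)
  (rho : U -> U -> R) (F : T -> U) :
  ultrametric d -> ultrametric rho -> bijective F ->
  (forall Z, isK d Z <-> isK rho (F @: Z)) -> preserves_balls d rho F.
Proof.
move=> hd hr [g FK gK] HK; have Finj := can_inj FK; have ginj := can_inj gK.
split.
  move=> Z /(isb_K _ hd) [KZ cZ]; apply/(isb_K _ hr); split.
    exact: (proj1 (HK Z) KZ).
  by rewrite card_imset.
move=> W /(isb_K _ hr) [KW cW]; apply/(isb_K _ hd).
rewrite -(can2_imset_pre _ gK FK); split.
  by apply: (proj2 (HK _)); rewrite imK.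
by rewrite card_imset.
Qed.

Lemma pb_HK (R : realType) (T U : finType) (d : T -> T -> R)
  (rho : U -> U -> R) (F : T -> U) :
  ultrametric d -> ultrametric rho -> bijective F ->
  preserves_balls d rho F -> forall Z, isK d Z <-> isK rho (F @: Z).
Proof.
move=> hd hr [g FK gK] [pb1 pb2] Z; have Finj := can_inj FK.
have cZ : #|F @: Z| = #|Z| by rewrite card_imset.
case: (leqP #|Z| 1) => h.
  split=> K.
    have [z zZ] := isK_n0 hd K; rewrite (single h zZ) imset_set1; exact: isK_set1.
  have [u] := isK_n0 hr K; case/imsetP=> z zZ _.
  rewrite (single h zZ); exact: isK_set1.
split=> K.
  have := pb1 Z (proj2 (isb_K _ hd) (conj K h)).
  by case/(isb_K _ hr).
have cF : (1 < #|F @: Z|)%N by rewrite cZ.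
have := pb2 _ (proj2 (isb_K _ hr) (conj K cF)).
rewrite -(can2_imset_pre _ gK FK) imK //; by case/(isb_K _ hd).
Qed.

Theorem theorem24 (R : realType) (T U : finType)
  (d : T -> T -> R) (rho : U -> U -> R) :
  in_U d -> in_U rho ->
  (ucong d rho <-> exists F : T -> U, bijective F /\ preserves_balls d rho F).
Proof.
move=> [hd hT] [hr hU].
have : (0 < #|T|)%N by rewrite -hT. case/card_gt0P => t0 _.
have : (0 < #|U|)%N by rewrite -hU. case/card_gt0P => u0 _.
rewrite /ucong /rep_tree; split.
  move=> hiso.
  have [F [Finj FAB HZ]] := fwd_aux hd hr (isK_setT hd t0) (isK_setT hr u0)
    (eq_leq (cardsT T)) (eq_leq (cardsT U)) hiso.
  have Finj' : injective F by move=> x y; apply: Finj; rewrite inE.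
  have cTU : #|T| = #|U|.
    by rewrite -cardsT -(card_in_imset Finj) FAB cardsT.
  have Fb : bijective F by apply: inj_card_bij => //; rewrite cTU.
  exists F; split => //; apply: HK_pb => // Z; apply: HZ; exact: subsetT.
move=> [F [Fb pb]].
have HK := pb_HK hd hr Fb pb.
have FT : F @: [set: T] = [set: U].
  case: Fb => g FK gK; apply/setP=> y; rewrite inE -{1}(gK y) imset_f //.
have := bwd_aux hd hr Fb HK (isK_setT hd t0) (eq_leq (cardsT T)).
by rewrite FT (bij_eq_card Fb).
Qed.
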